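(* Let $n$ be a positive integer and let $\lambda$ and $\mu$ be integer partitions of $n$. If $\lambda_1 = \mu_1$ and $\mathrm{pre}_2(\lambda) = \mathrm{pre}_2(\mu)$, then $\lambda = \mu$.
   Context: An integer partition $\lambda = (\lambda_1, \dots, \lambda_\ell)$ of a positive integer $n$ is a weakly decreasing finite sequence of positive integers whose sum is $n$; the $\lambda_i$ are its parts and $\ell(\lambda)=\ell$ is its length. For a partition $\lambda = (\lambda_1,\dots,\lambda_\ell)$, $\mathrm{pre}_2(\lambda)$ denotes the partition whose multiset of parts is the multiset $\{\!\{\lambda_i\lambda_j : 1 \le i < j \le \ell\}\!\}$ (with multiplicities, arranged in weakly decreasing order); if $\ell < 2$ it is the empty partition. *)

(* Defs.v *)
From mathcomp Require Import all_boot.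
Set Implicit Arguments. Unset Strict Implicit. Unset Printing Implicit Defensive.

Definition is_partition (n : nat) (l : seq nat) : bool :=
  [&& sorted geq l, all (fun x => 0 < x) l & sumn l == n].

Definition pre2 (l : seq nat) : seq nat :=
  sort geq (flatten [seq [seq nth 0 l i * nth 0 l j | j <- iota i.+1 (size l - i.+1)]
                        | i <- iota 0 (size l)]).

Definition part1 (l : seq nat) : nat := head 0 l.

Example pre2_ex : pre2 [:: 3; 2; 1] = [:: 6; 3; 2]. Proof. by []. Qed.

(* Main.v *)
Require Import Defs.
From mathcomp Require Import all_boot.
Set Implicit Arguments. Unset Strict Implicit.

Fixpoint Q (l : seq nat) : seq nat :=
  if l is y :: s then map (muln y) s ++ Q s else [::].

Definition F (m s : seq nat) : seq nat :=
  flatten [seq map (muln c) s | c <- m] ++ Q s.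

Lemma pre2_Q (l : seq nat) :
  flatten [seq [seq nth 0 l i * nth 0 l j | j <- iota i.+1 (size l - i.+1)]
                        | i <- iota 0 (size l)] = Q l.
Proof.
elim: l => [|y s IH] //=.
rewrite -IH subn1 /=.
have -> : iota 1 (size s) = [seq 1 + i | i <- iota 0 (size s)] by rewrite -iotaDl.
rewrite -map_comp /=.
congr (_ ++ _).
  rewrite -{3}(mkseq_nth 0 s) /mkseq -map_comp.
  by elim: (iota 0 (size s)) => //= i l ->.
rewrite -map_comp; congr flatten. elim: (iota 0 (size s)) => //= i l ->; congr (_ :: _).
rewrite subSS.
have -> : iota i.+2 (size s - i.+1) = [seq 1 + j | j <- iota i.+1 (size s - i.+1)]
  by rewrite -iotaDl.
by rewrite -map_comp.
Qed.

Lemma flat_step (m s : seq nat) (y : nat) :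
  perm_eq (flatten [seq map (muln c) (y :: s) | c <- m])
          ([seq c * y | c <- m] ++ flatten [seq map (muln c) s | c <- m]).
Proof.
elim: m => [|c m IH] //=.
rewrite perm_cons perm_sym perm_catCA perm_cat2l perm_sym; exact: IH.
Qed.

Lemma F_step (m s : seq nat) (y : nat) :
  perm_eq (F m (y :: s)) ([seq c * y | c <- m] ++ F (rcons m y) s).
Proof.
rewrite /F /= -cats1 map_cat flatten_cat /= cats0 !catA perm_cat2r perm_cat2r.
exact: flat_step.
Qed.

Lemma Q_bound (b : nat) (l : seq nat) w :
  all (fun d => d <= b) l -> w \in Q l -> w <= b * b.
Proof.
elim: l => [|y s IH] //= /andP [hy hs].
rewrite mem_cat => /orP [/mapP [d hd ->]|]; last exact: IH.
by apply: leq_mul => //; move/allP: hs; apply.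
Qed.

Lemma F_bound (x y : nat) (m l : seq nat) w :
  all (fun c => c <= x) m -> all (fun d => d <= y) l -> y <= x ->
  w \in F m l -> w <= x * y.
Proof.
move=> hm hl hyx; rewrite mem_cat => /orP [|].
  move/flattenP => [s' /mapP [c hc ->] /mapP [d hd ->]].
  apply: leq_mul; first by move/allP: hm; apply.
  by move/allP: hl; apply.
move=> hw; apply: leq_trans (Q_bound hl hw) _.
by rewrite leq_mul2r hyx orbT.
Qed.

Lemma geq_trans' : transitive geq.
Proof. by move=> a b c h1 h2; apply: leq_trans h2 h1. Qed.

Lemma main (x : nat) : 0 < x -> forall s m t,
  x \in m -> all (fun c => c <= x) m -> sorted geq s -> sorted geq t ->
  all (fun d => d <= x) s -> all (fun d => d <= x) t -> size s = size t ->
  perm_eq (F m s) (F m t) -> s = t.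
Proof.
move=> xpos.
elim => [|y s IH] m [|z t] //= hx hm ss st /andP [hy hs] /andP [hz ht] [hsz] hp.
have hxy : forall (u : nat) (v : seq nat), sorted geq (u :: v) -> u <= x ->
   (x * u \in F m (u :: v)) /\ (forall w, w \in F m (u :: v) -> w <= x * u).
  move=> u v huv hux; split.
    rewrite (perm_mem (@F_step m v u)) mem_cat; apply/orP; left.
    by apply/mapP; exists x.
  move=> w hw; apply: F_bound hm _ hux hw.
  rewrite /= leqnn /=.
  exact: (order_path_min geq_trans' huv).
have [h1 h2] := hxy y s ss hy.
have [h3 h4] := hxy z t st hz.
have e : y = z.
  apply/eqP; rewrite eqn_leq -(leq_pmul2l xpos) (h4 (x * y)) /=;
    last by rewrite -(perm_mem hp).
  by rewrite -(leq_pmul2l xpos) h2 // (perm_mem hp).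
subst z; congr (_ :: _).
apply: (IH (rcons m y)).
- by rewrite mem_rcons inE hx orbT.
- by rewrite all_rcons hy hm.
- exact: path_sorted ss.
- exact: path_sorted st.
- exact: hs.
- exact: ht.
- exact: hsz.
have e1 := @F_step m s y; rewrite perm_sym in e1.
have := perm_trans (perm_trans e1 hp) (@F_step m t y).
by rewrite perm_cat2l.
Qed.

Fixpoint T (k : nat) : nat := if k is k'.+1 then k' + T k' else 0.

Lemma size_Q l : size (Q l) = T (size l).
Proof. by elim: l => [|y s IH] //=; rewrite size_cat size_map IH. Qed.

Lemma T_mono : forall b a, 0 < a -> a < b -> T a < T b.
Proof.
elim => [|b IH] a ha //= hab.
rewrite ltnS leq_eqVlt in hab; case/orP: hab => [/eqP e|hab].
  by subst a; rewrite -[X in X < _]add0n ltn_add2r.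
apply: leq_trans (IH a ha hab) _; exact: leq_addl.
Qed.

Lemma T_inj a b : 0 < a -> 0 < b -> T a = T b -> a = b.
Proof.
move=> ha hb e; case: (ltngtP a b) => // h.
  by have := T_mono ha h; rewrite e ltnn.
by have := T_mono hb h; rewrite e ltnn.
Qed.

Theorem lemma2 (n : nat) (lam mu : seq nat) :
  0 < n -> is_partition n lam -> is_partition n mu ->
  part1 lam = part1 mu -> pre2 lam = pre2 mu -> lam = mu.
Proof.
move=> hn /and3P [sl pl /eqP nl] /and3P [sm pm /eqP nm] h1 h2.
have hp : perm_eq (Q lam) (Q mu).
  rewrite -pre2_Q -(pre2_Q mu) -(perm_sort geq) -/(pre2 lam) h2 /pre2 perm_sort.
  exact: perm_refl.
clear h2; case: lam sl pl nl h1 hp => [|x s] sl pl nl; first by move: hn; rewrite -nl.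
case: mu sm pm nm => [|x' t] sm pm nm; first by move: hn; rewrite -nm.
rewrite /part1 => ex; simpl in ex; subst x'.
move=> hp.
have hsz : size s = size t.
  have := perm_size hp; rewrite !size_Q /= => e.
  by have /eq_add_S := T_inj (ltn0Sn _) (ltn0Sn _) e.
have xpos : 0 < x by case/andP: pl.
congr (_ :: _).
apply: (main xpos (m := [:: x])) => //.
- by rewrite inE.
- by rewrite /= leqnn.
- exact: path_sorted sl.
- exact: path_sorted sm.
- exact: (order_path_min geq_trans' sl).
- exact: (order_path_min geq_trans' sm).
by rewrite /F /= !cats0.
Qed.
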